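(* Let $2\le n\le\infty$, $r\ge 0$, $p,q\in\mathbb Z$ and let $A$ be an $n$-multicomplex. Then the map $\pi_r\colon ZW_r^{p,q}(A)\to E_r^{p,q}(A)$, defined as the composite of $z_r\colon ZW_r^{p,q}(A)\to Z_r^{p,q}(A)$ (where $z_0=\mathrm{id}$ and $z_r(a_0,\dots,a_{r-1})=a_0$ for $r\ge1$) with the quotient map $Z_r^{p,q}(A)\to E_r^{p,q}(A)$, is surjective and satisfies $\ker\pi_r=\operatorname{im} w_r$, where $w_r\colon BW_r^{p,q-1}(A)\to ZW_r^{p,q}(A)$. Moreover $z_r\circ w_r=\beta_r$ lands in $B^{p,q}_r(A)$, where $\beta_0=0$, $\beta_1=d_0$ and for $r\ge2$, $\beta_r(b_0,\dots,b_{r-2};a;c_0,\dots,c_{r-2})=d_0a+\sum_{i=1}^{r-1}(-1)^id_ib_{r-1-i}$. Hence $E_r^{p,q}(A)\cong ZW_r^{p,q}(A)/w_r(BW_r^{p,q-1}(A))$, naturally in $A$, and under this isomorphism the differential $\Delta_r$ of $E_r$ corresponds to the well-defined map \[ [(a_0,\dots,a_{r-1})]\longmapsto \Big[\Big(\sum_{i=1}^r(-1)^id_{i+k}a_{r-i}\Big)_{k=0,\dots,r-1}\Big] \] from $ZW_r^{p,q}(A)/w_r(BW_r^{p,q-1}(A))$ to $ZW_r^{p-r,q+1-r}(A)/w_r(BW_r^{p-r,q-r}(A))$.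
   Context: Throughout, $R$ is a commutative unital ring. For $1\le n\le\infty$, an $n$-multicomplex is a $\mathbb Z\times\mathbb Z$-bigraded $R$-module $A=\{A^{p,q}\}$ with $R$-linear maps $d_i\colon A\to A$ ($i\ge0$) of bidegree $(-i,1-i)$ such that $\sum_{i+j=l}(-1)^id_id_j=0$ for all $l\ge0$, and $d_i=0$ for all $i\ge n$ (no vanishing condition when $n=\infty$). Morphisms are bidegree $(0,0)$ $R$-linear maps commuting with all $d_i$; the category is denoted $\mathrm{Ch}_n$. Spectral sequence: $Z_0^{p,q}(A)=A^{p,q}$; for $r\ge1$, $Z_r^{p,q}(A)$ is the set of $a_0\in A^{p,q}$ for which there exist $a_j\in A^{p-j,q-j}$ ($1\le j\le r-1$) with $\sum_{i+j=l}(-1)^id_ia_j=0$ for $0\le l\le r-1$. $B_0^{p,q}(A)=0$, $B_1^{p,q}(A)=A^{p,q}\cap\operatorname{im}d_0$, and for $r\ge2$, $B_r^{p,q}(A)$ is the set of $x\in A^{p,q}$ for which there exist $b_i\in A^{p+r-1-i,q+r-2-i}$ ($0\le i\le r-1$) with $x=\sum_{i=0}^{r-1}(-1)^id_ib_{r-1-i}$ and $\sum_{i=0}^l(-1)^id_ib_{l-i}=0$ for $0\le l\le r-2$. Then $E_r^{p,q}(A)=Z_r^{p,q}(A)/B_r^{p,q}(A)$ with differential $\Delta_r[a_0]=[\sum_{i=1}^r(-1)^id_ia_{r-i}]$ (with $a_j$ as in the definition of $Z_r$). Witness cycles: $ZW_0^{p,q}(A)=A^{p,q}$; for $r\ge1$,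 $ZW_r^{p,q}(A)$ is the $R$-module of tuples $(a_0,\dots,a_{r-1})$ with $a_i\in A^{p-i,q-i}$ and $\sum_{i+j=l}(-1)^id_ia_j=0$ for $0\le l\le r-1$. Witness boundaries: $BW_0^{p,q-1}(A)=0$, $BW_1^{p,q-1}(A)=A^{p,q-1}$, and for $r\ge2$, $BW_r^{p,q-1}(A)=ZW_{r-1}^{p+r-1,q+r-2}(A)\oplus A^{p,q-1}\oplus ZW_{r-1}^{p-1,q-1}(A)$, with elements written $(b_0,\dots,b_{r-2};a;c_0,\dots,c_{r-2})$. The map $w_r\colon BW_r^{p,q-1}(A)\to ZW_r^{p,q}(A)$ is $w_0=0$, $w_1=d_0$, and for $r\ge2$ its $j$-th component ($0\le j\le r-1$) is \[ w_r(\underline b;a;\underline c)_j=d_ja+(-1)^j\sum_{i=j+1}^{r+j-1}(-1)^id_ib_{r+j-1-i}+c_{j-1},\qquad c_{-1}:=0. \] *)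

(* Defs.v *)
From HB Require Import structures.
From mathcomp Require Import all_boot all_order all_algebra.
Set Implicit Arguments. Unset Strict Implicit. Unset Printing Implicit Defensive.
Import Order.TTheory GRing.Theory Num.Theory.
Local Open Scope ring_scope.

(* Encoding of a bigraded R-module {A^{p,q}}: an ambient R-module M together
   with a family of submodules A^{p,q} of M (for a genuine bigraded module take
   M = (+)_{p,q} A^{p,q}).  The bound n is [Some n] (finite)
   or [None] (n = infinity). *)

Record multicomplex (R : comPzRingType) (n : option nat) (M : lmodType R) := Multicomplex {
  piece : int -> int -> {pred M};
  piece_closed : forall p q, GRing.submod_closed (piece p q);
  dd : nat -> {linear M -> M};
  dd_deg : forall (i : nat) p q x, x \in piece p q ->
      dd i x \in piece (p - i%:Z) (q + 1 - i%:Z);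
  dd_rel : forall (l : nat) p q x, x \in piece p q ->
      \sum_(i < l.+1) (-1) ^+ i *: dd i (dd (l - i)%N x) = 0;
  dd_vanish : match n with
              | Some m => forall (i : nat) p q x, (m <= i)%N -> x \in piece p q -> dd i x = 0
              | None => True
              end
}.

Arguments piece {R n M}.
Arguments dd {R n M}.

Definition n_ge2 (n : option nat) : Prop :=
  match n with Some m => (2 <= m)%N | None => True end.

Section Spectral.
Variables (R : comPzRingType) (n : option nat) (M : lmodType R) (A : multicomplex n M).

Local Notation A_ := (piece A).
Local Notation d := (dd A).

Definition Zr (r : nat) (p q : int) (x : M) : Prop :=
  x \in A_ p q /\
  (r = 0%N \/
   exists a : nat -> M, a 0%N = x /\
     (forall j : nat, (1 <= j < r)%N -> a j \in A_ (p - j%:Z) (q - j%:Z)) /\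
     (forall l : nat, (l < r)%N ->
        \sum_(i < l.+1) (-1) ^+ i *: d i (a (l - i)%N) = 0)).

Definition Br (r : nat) (p q : int) (x : M) : Prop :=
  match r with
  | 0 => x = 0
  | 1 => x \in A_ p q /\ exists y, y \in A_ p (q - 1) /\ d 0%N y = x
  | _ => x \in A_ p q /\
         exists b : nat -> M,
           (forall i : nat, (i < r)%N ->
              b i \in A_ (p + r%:Z - 1 - i%:Z) (q + r%:Z - 2 - i%:Z)) /\
           x = \sum_(i < r) (-1) ^+ i *: d i (b (r - 1 - i)%N) /\
           (forall l : nat, (l <= r - 2)%N ->
              \sum_(i < l.+1) (-1) ^+ i *: d i (b (l - i)%N) = 0)
  end.

(* ZW_r^{p,q}(A): an element is represented by a sequence a : nat -> M;
   for r = 0 only a 0 matters (ZW_0 = A^{p,q}); for r >= 1 the entries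
   a 0, ..., a (r-1) form the tuple (a_0,...,a_{r-1}). *)
Definition ZW (r : nat) (p q : int) (a : nat -> M) : Prop :=
  match r with
  | 0 => a 0%N \in A_ p q
  | _ => (forall i : nat, (i < r)%N -> a i \in A_ (p - i%:Z) (q - i%:Z)) /\
       (forall l : nat, (l < r)%N ->
          \sum_(i < l.+1) (-1) ^+ i *: d i (a (l - i)%N) = 0)
  end.

Definition zwlen (r : nat) : nat := maxn r 1.

Definition zr (a : nat -> M) : M := a 0%N.

(* BW_r^{p,q-1}(A): elements (b_0..b_{r-2}; a; c_0..c_{r-2}) represented
   by triples ((b, a), c).  BW_0 = 0 (all triples represent 0), BW_1 = A^{p,q-1}. *)
Definition BWt := ((nat -> M) * M * (nat -> M))%type.

Definition BW (r : nat) (p q : int) (t : BWt) : Prop :=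
  let: (b, x, c) := t in
  match r with
  | 0 => True
  | 1 => x \in A_ p (q - 1)
  | _ => ZW r.-1 (p + r%:Z - 1) (q + r%:Z - 2) b /\ x \in A_ p (q - 1) /\
         ZW r.-1 (p - 1) (q - 1) c
  end.

Definition wr (r : nat) (t : BWt) (j : nat) : M :=
  let: (b, x, c) := t in
  if r == 0%N then 0
  else d j x
       + (-1) ^+ j *: \sum_(j.+1 <= i < r + j) (-1) ^+ i *: d i (b (r + j - 1 - i)%N)
       + (if j == 0%N then 0 else c j.-1).

Definition betar (r : nat) (t : BWt) : M :=
  let: (b, x, c) := t in
  if r == 0%N then 0
  else d 0%N x + \sum_(1 <= i < r) (-1) ^+ i *: d i (b (r - 1 - i)%N).

(* the candidate differential on ZW_r / w_r(BW_r) *)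
Definition Phir (r : nat) (a : nat -> M) (k : nat) : M :=
  \sum_(1 <= i < r.+1) (-1) ^+ i *: d (i + k)%N (a (r - i)%N).

(* representative of Delta_r [a_0] computed from the witnesses a *)
Definition Deltarep (r : nat) (a : nat -> M) : M :=
  \sum_(1 <= i < r.+1) (-1) ^+ i *: d i (a (r - i)%N).

End Spectral.

Definition mc_morph (R : comPzRingType) (n : option nat) (M M' : lmodType R)
  (A : multicomplex n M) (A' : multicomplex n M') (f : {linear M -> M'}) : Prop :=
  (forall p q x, x \in piece A p q -> f x \in piece A' p q) /\
  (forall (i : nat) p q x, x \in piece A p q -> f (dd A i x) = dd A' i (f x)).

Definition mapBWt (R : comPzRingType) (M M' : lmodType R) (f : M -> M')
  (t : BWt M) : BWt M' :=
  let: (b, x, c) := t in (fun j => f (b j), f x, fun j => f (c j)).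

(* Main.v *)
Require Import Defs.
From HB Require Import structures.
From mathcomp Require Import all_boot all_order all_algebra zify.
Import Order.TTheory GRing.Theory Num.Theory.
Local Open Scope ring_scope.
Set Implicit Arguments. Unset Strict Implicit.

Section S.
Variables (R : comPzRingType) (n : option nat) (M : lmodType R) (A : multicomplex n M).
Local Notation d := (dd A).
Local Notation P := (piece A).

Lemma P0 p q : 0 \in P p q.
Proof. by case: (piece_closed A p q). Qed.
Lemma PZD p q a x y : x \in P p q -> y \in P p q -> a *: x + y \in P p q.
Proof. by case: (piece_closed A p q) => _ H hx hy; apply: H. Qed.
Lemma PD p q x y : x \in P p q -> y \in P p q -> x + y \in P p q.
Proof. by move=> hx hy; rewrite -[x]scale1r; apply: PZD. Qed.
Lemma PZ p q a x : x \in P p q -> a *: x \in P p q.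
Proof. by move=> hx; rewrite -[_ *: _]addr0; apply: PZD => //; apply: P0. Qed.
Lemma PN p q x : x \in P p q -> - x \in P p q.
Proof. by move=> hx; rewrite -scaleN1r; apply: PZ. Qed.
Lemma PB p q x y : x \in P p q -> y \in P p q -> x - y \in P p q.
Proof. by move=> hx hy; apply: PD => //; apply: PN. Qed.
Lemma Psum p q (I : Type) (s : seq I) (Q : pred I) (F : I -> M) :
  (forall i, Q i -> F i \in P p q) -> \sum_(i <- s | Q i) F i \in P p q.
Proof. by move=> h; apply: (big_ind (fun x => x \in P p q)) => //; [apply: P0|apply: PD]. Qed.
Lemma Peq p q p' q' x : x \in P p q -> p = p' -> q = q' -> x \in P p' q'.
Proof. by move=> h <- <-. Qed.
Lemma Pd p q p' q' (i : nat) x : x \in P p q -> p' = p - i%:Z -> q' = q + 1 - i%:Z ->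
  d i x \in P p' q'.
Proof. by move=> h -> ->; apply: dd_deg. Qed.


Definition conv (u : nat -> M) (l : nat) := \sum_(i < l.+1) (-1) ^+ i *: d i (u (l - i)%N).

Lemma sgn2 a b k : a = (b + k * 2)%N -> (-1) ^+ a = (-1) ^+ b :> R.
Proof. by move=> ->; rewrite exprD exprM sqrr_sign mulr1. Qed.

Lemma sum_split (F : nat -> M) a b :
  \sum_(i < a + b) F i = \sum_(i < a) F i + \sum_(i < b) F (a + i)%N.
Proof. by rewrite big_split_ord. Qed.

Lemma partial p q K l y : y \in P p q ->
  \sum_(i < l.+1) (-1) ^+ i *: d i (d (K + l - i)%N y) =
  - \sum_(v < K) (-1) ^+ (l.+1 + v) *: d (l.+1 + v) (d (K - 1 - v)%N y).
Proof.
move=> hy; have H := dd_rel (K + l) hy.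
have e : (K + l).+1 = (l.+1 + K)%N by rewrite addSn addnC.
rewrite e (sum_split (fun i => (-1) ^+ i *: d i (d (K + l - i)%N y))) in H.
apply/eqP; rewrite -addr_eq0; apply/eqP; rewrite -[RHS]H; congr (_ + _).
apply: eq_bigr => v _; congr (_ *: d _ (d _ _)). clear; move: (nat_of_ord v) => w. lia.
Qed.

Lemma tri (G : nat -> nat -> M) N :
  \sum_(m < N) \sum_(v < m.+1) G m v = \sum_(v < N) \sum_(w < N - v) G (v + w)%N v.
Proof.
elim: N => [|N IH]; first by rewrite !big_ord0.
rewrite big_ord_recr /= IH [in RHS]big_ord_recr /= subSnn big_ord1 addn0.
rewrite big_ord_recr /= addrA; congr (_ + _).
rewrite -big_split /=; apply: eq_bigr => v _.
rewrite subSn; last exact: ltnW (ltn_ord v).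
rewrite big_ord_recr /=; congr (_ + G _ _); by rewrite subnKC //; apply: ltnW.
Qed.


Lemma conv_Phir N u :
  (forall s, (s < N)%N -> exists p q, u s \in P p q) ->
  (forall m, (m < N)%N -> conv u m = 0) ->
  forall l, conv (Phir A N u) l = 0.
Proof.
move=> hu hz l; rewrite /conv /Phir.
pose G m v := - ((-1) ^+ m.+1 * (-1) ^+ (l.+1 + v)) *: d (l.+1 + v) (d (m - v)%N (u (N - m.+1)%N)).
transitivity (\sum_(m < N) \sum_(v < m.+1) G m v).
  transitivity (\sum_(i < l.+1) \sum_(m < N)
     ((-1) ^+ m.+1 *: ((-1) ^+ i *: d i (d (m.+1 + l - i)%N (u (N - m.+1)%N))))).
    apply: eq_bigr => i _.
    rewrite big_add1 /= big_mkord linear_sum scaler_sumr; apply: eq_bigr => m _.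
    rewrite linearZ /= scalerA mulrC -scalerA; congr (_ *: (_ *: d _ (d _ _))).
    by rewrite addnBA // -ltnS.
  rewrite exchange_big /=; apply: eq_bigr => m _.
  have [p [q hp]] := hu (N - m.+1)%N ltac:(have := ltn_ord m; lia).
  rewrite -scaler_sumr (partial _ _ hp) scalerN scaler_sumr -sumrN.
  apply: eq_bigr => v _; rewrite /G scalerA -scaleNr; congr (_ *: d _ (d _ _)); lia.
rewrite tri big1 // => -[v hv'] _ /=.
have hv := hv'.
transitivity (\sum_(w < (N - v.+1).+1)
   (- (-1) ^+ l) *: d (l.+1 + v) ((-1) ^+ w *: d w (u (N - v.+1 - w)%N))).
  rewrite -subSn //; apply: eq_bigr => -[w hw] _ /=.
  rewrite /G linearZ /= scalerA; congr (_ *: d _ (d _ _)); last first.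
  - congr (u _); clear G hu hz; lia.
  - by rewrite addKn.
  rewrite mulNr -exprD; congr (- _).
  rewrite -exprD; apply: sgn2 (v.+1)%N _; clear G hu hz; lia.
rewrite -scaler_sumr -linear_sum.
have H0 : conv u (N - v.+1) = 0 by apply: hz; clear G hu; lia.
rewrite /conv in H0; by rewrite H0 linear0 scaler0.
Qed.


Definition cs (c : nat -> M) (j : nat) : M := if j == 0%N then 0 else c j.-1.

Lemma conv_ext u v l : (forall j, (j <= l)%N -> u j = v j) -> conv u l = conv v l.
Proof. move=> h; apply: eq_bigr => -[i hi] _ /=; rewrite h //; apply: leq_subr. Qed.

Lemma conv_lin (a : R) u v l :
  conv (fun j => a *: u j + v j) l = a *: conv u l + conv v l.
Proof.
rewrite /conv scaler_sumr -big_split; apply: eq_bigr => i _ /=.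
by rewrite linearD linearZ /= scalerDr !scalerA mulrC.
Qed.

Lemma conv_add u v l : conv (fun j => u j + v j) l = conv u l + conv v l.
Proof. by rewrite /conv -big_split; apply: eq_bigr => i _; rewrite linearD scalerDr. Qed.

Lemma conv_sub u v l : conv (fun j => u j - v j) l = conv u l - conv v l.
Proof. by rewrite /conv -sumrB; apply: eq_bigr => i _; rewrite linearB scalerBr. Qed.

Lemma conv_d p q x l : x \in P p q -> conv (fun j => d j x) l = 0.
Proof. exact: dd_rel. Qed.

Lemma conv_cs0 c : conv (cs c) 0 = 0.
Proof. by rewrite /conv big_ord1 /cs /= linear0 scaler0. Qed.

Lemma conv_csS c l : conv (cs c) l.+1 = conv c l.
Proof.
rewrite /conv big_ord_recr /= subnn /cs /= linear0 scaler0 addr0.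
apply: eq_bigr => -[i hi] _ /=; rewrite subSn //.
Qed.

Lemma wr_dec r b x c j : (1 <= r)%N ->
  wr A r (b, x, c) j = d j x + Phir A r.-1 b j + cs c j.
Proof.
case: r => // r _; rewrite /wr /= /Phir /cs; congr (_ + _ + _).
rewrite -[j.+1]add1n big_addn addnK scaler_sumr big_add1 [RHS]big_add1 /=.
apply: eq_bigr => i _; rewrite scalerA; congr (_ *: d _ (b _)).
- by rewrite -exprD; apply: (@sgn2 _ _ j); lia.
- lia.
Qed.

Lemma wrel r b x c p0 q0 :
  (1 <= r)%N -> x \in P p0 q0 ->
  (forall k, (k < r.-1)%N -> exists p q, b k \in P p q) ->
  (forall s, (s < r.-1)%N -> conv b s = 0) ->
  forall l, conv (wr A r (b, x, c)) l = conv (cs c) l.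
Proof.
move=> hr hx hb hbz l.
rewrite (conv_ext (v := fun j => (d j x + Phir A r.-1 b j) + cs c j)); last first.
  by move=> j _; rewrite wr_dec.
by rewrite conv_add conv_add (conv_d _ hx) (conv_Phir hb hbz) !add0r.
Qed.


Definition ZWf r p q a := (forall i, (i < r)%N -> a i \in P (p - i%:Z) (q - i%:Z)) /\
  (forall l, (l < r)%N -> conv a l = 0).

Definition BWf r p q b x c := x \in P p (q - 1) /\
  (forall k, (k < r.-1)%N -> b k \in P (p + r%:Z - 1 - k%:Z) (q + r%:Z - 2 - k%:Z)) /\
  (forall s, (s < r.-1)%N -> conv b s = 0) /\
  (forall k, (k < r.-1)%N -> c k \in P (p - 1 - k%:Z) (q - 1 - k%:Z)) /\
  (forall s, (s < r.-1)%N -> conv c s = 0).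

Lemma ZW_ZWf r p q a : (1 <= r)%N -> ZW A r p q a <-> ZWf r p q a.
Proof. by case: r. Qed.

Lemma BW_BWf r p q b x c : (1 <= r)%N -> BW A r p q (b, x, c) <-> BWf r p q b x c.
Proof.
case: r => // -[|r] _ /=.
  by split=> [hx|[]//]; split=> //; do !split=> //.
split=> [[[hb1 hb2] [hx [hc1 hc2]]]|[hx [hb1 [hb2 [hc1 hc2]]]]]; first by do !split.
by do !split.
Qed.

Lemma Phir_deg N u p' q' k :
  (forall s, (s < N)%N -> u s \in P (p' + (N - s)%N%:Z) (q' + (N - s)%N%:Z - 1)) ->
  Phir A N u k \in P (p' - k%:Z) (q' - k%:Z).
Proof.
move=> h; rewrite /Phir big_add1 /= big_mkord; apply: Psum => -[i hi] _ /=.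
apply: PZ; apply: Pd; first apply: (h (N - i.+1)%N); lia.
Qed.

Lemma bdeg r p q b j : (1 <= r)%N ->
  (forall k, (k < r.-1)%N -> b k \in P (p + r%:Z - 1 - k%:Z) (q + r%:Z - 2 - k%:Z)) ->
  Phir A r.-1 b j \in P (p - j%:Z) (q - j%:Z).
Proof.
move=> hr hb; apply: Phir_deg => s hs; apply: Peq (hb s hs) _ _; lia.
Qed.

Lemma wr_deg r p q b x c j : (1 <= r)%N -> BWf r p q b x c -> (j < r)%N ->
  wr A r (b, x, c) j \in P (p - j%:Z) (q - j%:Z).
Proof.
move=> hr [hx [hb [_ [hc _]]]] hj; rewrite wr_dec //.
apply: PD; first apply: PD.
- apply: Pd hx _ _; lia.
- exact: bdeg.
- rewrite /cs; case: j hj => [|j] hj /=; first exact: P0.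
  apply: Peq (hc j _) _ _; lia.
Qed.

Lemma L4 r p q a b x : (1 <= r)%N -> ZWf r p q a -> x \in P p (q - 1) ->
  (forall k, (k < r.-1)%N -> b k \in P (p + r%:Z - 1 - k%:Z) (q + r%:Z - 2 - k%:Z)) ->
  (forall s, (s < r.-1)%N -> conv b s = 0) ->
  a 0%N = d 0%N x + Phir A r.-1 b 0%N ->
  exists c, BWf r p q b x c /\ forall j, (j < r)%N -> a j = wr A r (b, x, c) j.
Proof.
move=> hr [ha1 ha2] hx hb hbz ha0.
pose c k := a k.+1 - (d k.+1 x + Phir A r.-1 b k.+1).
have ha : forall j, (j < r)%N -> a j = wr A r (b, x, c) j.
  move=> j hj; rewrite wr_dec // /cs; case: j hj => [|j] hj /=; first by rewrite addr0.
  by rewrite /c addrC subrK.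
exists c; split=> //; do !split=> //.
- move=> k hk; apply: PB; first by apply: Peq (ha1 k.+1 _) _ _; lia.
  apply: PD; first by apply: Pd hx _ _; lia.
  by apply: Peq (bdeg k.+1 hr hb) _ _; lia.
- move=> s hs.
  have hb' : forall k, (k < r.-1)%N -> exists p q, b k \in P p q.
    by move=> k hk; do 2 eexists; apply: hb.
  rewrite -conv_csS -(wrel c hr hx hb' hbz) -(ha2 s.+1); last lia.
  by apply: conv_ext => j hj; rewrite ha //; lia.
Qed.


Lemma Br0 r p q : Br A r p q 0.
Proof.
case: r => [|[|r]] //=.
  by split; [exact: P0 | exists 0; split; [exact: P0 | rewrite linear0]].
split; first exact: P0.
exists (fun _ => 0); split; first by move=> *; exact: P0.
split; first by rewrite big1 // => i _; rewrite linear0 scaler0.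
by move=> l _; rewrite big1 // => i _; rewrite linear0 scaler0.
Qed.

Lemma c1 r p q a : ZW A r p q a -> Zr A r p q (zr a).
Proof.
case: r => [|r] /=; first by move=> h; split=> //; left.
move=> [h1 h2]; split; first by apply: Peq (h1 0%N _) _ _ => //; lia.
right; exists a; split=> //; split=> [j hj|l hl]; [apply: h1; lia | exact: h2].
Qed.

Lemma c2 r p q x : Zr A r p q x -> exists a, ZW A r p q a /\ Br A r p q (zr a - x).
Proof.
case: r => [|r] /=.
  by move=> [hx _]; exists (fun _ => x); split=> //; rewrite /zr subrr.
move=> [hx [//|[a [ha0 [ha1 ha2]]]]]; exists a; split; last first.
  by rewrite /zr ha0 subrr; exact: (Br0 r.+1 p q).
split=> // -[|i] hi; first by rewrite ha0; apply: Peq hx _ _; lia.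
exact: ha1.
Qed.

Lemma c3 r p q t : BW A r p q t -> ZW A r p q (wr A r t).
Proof.
case: t => [[b x] c]; case: r => [|r]; first by move=> _; rewrite /= /wr /=; exact: P0.
rewrite BW_BWf // ZW_ZWf // => hbw; split=> [j hj|l hl]; first exact: wr_deg.
case: hbw => [hx [hb [hbz [hc hcz]]]].
have hb' : forall k, (k < r.+1.-1)%N -> exists p q, b k \in P p q.
  by move=> k hk; do 2 eexists; apply: hb.
rewrite (wrel c _ hx hb' hbz) //; case: l hl => [|l] hl; first exact: conv_cs0.
by rewrite conv_csS; apply: hcz.
Qed.

Lemma c5 r p q t : BW A r p q t -> zr (wr A r t) = betar A r t /\ Br A r p q (betar A r t).
Proof.
case: t => [[b x] c]; case: r => [|r]; first by move=> _; rewrite /zr /wr /betar /=.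
move=> hbw.
have e : zr (wr A r.+1 (b, x, c)) = betar A r.+1 (b, x, c).
  by rewrite /zr /wr /betar /= expr0 scale1r addn0 addr0.
split=> //.
have hB := hbw; rewrite BW_BWf // in hB; have [hx [hb [hbz [hc hcz]]]] := hB.
case: r hbw hB hx hb hbz hc hcz e => [|r] hbw hB hx hb hbz hc hcz e.
  rewrite /betar /= big_geq // addr0; split; first by apply: Pd hx _ _; lia.
  by exists x.
split.
  rewrite -e; apply: Peq (wr_deg _ hB _) _ _ => //; lia.
exists (fun i => if i == r.+1 then x else b i); split.
  move=> i hi; case: eqP => [->|/eqP ne]; first by apply: Peq hx _ _; lia.
  by apply: hb; rewrite /=; lia.
split.
  rewrite /betar /= big_ord_recl /= subn0 eqxx expr0 scale1r; congr (_ + _).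
  rewrite big_add1 /= big_mkord; apply: eq_bigr => -[i hi] _ /=.
  by have -> : ((r.+1 - i.+1)%N == r.+1) = false by apply/eqP; lia.
move=> l hl; have := hbz l ltac:(rewrite /=; lia); rewrite /conv => {2}<-.
apply: eq_bigr => -[i hi] _ /=.
by have -> : ((l - i)%N == r.+1) = false by apply/eqP; lia.
Qed.


Lemma c4 r p q a : ZW A r p q a ->
  (Br A r p q (zr a) <->
   exists t, BW A r p q t /\ forall j, (j < zwlen r)%N -> a j = wr A r t j).
Proof.
case: r => [|r] ha.
  split=> [h|[[[b x] c] [_ h]]]; last by rewrite /zr (h 0%N isT).
  by exists ((fun _ => 0), 0, (fun _ => 0)); split=> // -[|j] //= _; rewrite /wr.
have -> : zwlen r.+1 = r.+1 by rewrite /zwlen; apply/maxn_idPl.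
split; last first.
  move=> [[[b x] c] [hbw h]]; rewrite /zr (h 0%N isT).
  by case: (c5 hbw); rewrite /zr => ->.
rewrite ZW_ZWf // in ha.
have fin : forall b x, x \in P p (q - 1) ->
  (forall k, (k < r.+1.-1)%N -> b k \in P (p + r.+1%:Z - 1 - k%:Z) (q + r.+1%:Z - 2 - k%:Z)) ->
  (forall s, (s < r.+1.-1)%N -> conv b s = 0) ->
  a 0%N = d 0%N x + Phir A r.+1.-1 b 0%N ->
  exists t, BW A r.+1 p q t /\ forall j, (j < r.+1)%N -> a j = wr A r.+1 t j.
  move=> b x hx hb hbz e; have [c [hc h]] := L4 (isT : (1 <= r.+1)%N) ha hx hb hbz e.
  by exists (b, x, c); split=> //; rewrite BW_BWf.
case: r ha fin => [|r] ha fin.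
  move=> [_ [y [hy hdy]]]; apply: (fin (fun _ => 0) y) => //.
  by rewrite /Phir big_geq // addr0 hdy.
move=> [_ [b [hb [ha0 hrel]]]]; apply: (fin b (b r.+1)).
- by apply: Peq (hb r.+1 _) _ _ => //; lia.
- by move=> k hk; apply: hb; rewrite /= in hk *; lia.
- by move=> s hs; apply: hrel; rewrite /= in hs *; lia.
rewrite /zr in ha0; rewrite ha0 big_ord_recl /= subn0 expr0 scale1r; congr (_ + _).
rewrite /Phir big_add1 /= big_mkord; apply: eq_bigr => -[i hi] _ /=.
by rewrite addn0.
Qed.

Lemma d1 r p q a : (1 <= r)%N -> ZW A r p q a -> ZW A r (p - r%:Z) (q + 1 - r%:Z) (Phir A r a).
Proof.
move=> hr; rewrite !ZW_ZWf // => -[ha1 ha2]; split=> [k hk|l hl].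
  by apply: Phir_deg => s hs; apply: Peq (ha1 s hs) _ _; lia.
apply: conv_Phir => // s hs; do 2 eexists; exact: ha1.
Qed.

Lemma d2 r p q t : (1 <= r)%N -> BW A r p q t ->
  exists t', BW A r (p - r%:Z) (q + 1 - r%:Z) t' /\
             forall k, (k < r)%N -> Phir A r (wr A r t) k = wr A r t' k.
Proof.
case: t => [[b x] c]; case: r => // r hr hbw.
have hZ := d1 hr (c3 hbw); rewrite ZW_ZWf // in hZ.
have hB := hbw; rewrite BW_BWf // in hB; have [hx [hb [hbz [hc hcz]]]] := hB.
pose W j := d j x + Phir A r b j.
have hb' : forall k, (k < r.+1.-1)%N -> exists p q, b k \in P p q.
  by move=> k hk; do 2 eexists; apply: hb.
have hW : forall l, conv W l = 0.
  by move=> l; rewrite conv_add (conv_d _ hx) (conv_Phir hb' hbz) addr0.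
have [c' [hc' h]] : exists c', BWf r.+1 (p - r.+1%:Z) (q + 1 - r.+1%:Z) c (- W r.+1) c' /\
   forall j, (j < r.+1)%N -> Phir A r.+1 (wr A r.+1 (b, x, c)) j = wr A r.+1 (c, - W r.+1, c') j.
  apply: L4 => //.
  - apply: PN; apply: PD; first by apply: Pd hx _ _; lia.
    by apply: Peq (bdeg r.+1 hr hb) _ _; lia.
  - by move=> k hk; apply: Peq (hc k hk) _ _; lia.
  rewrite /Phir.
  under eq_big_nat => i hi do rewrite wr_dec // linearD scalerDr addn0.
  rewrite big_split /=; congr (_ + _).
    have := hW r.+1; rewrite /conv big_ord_recl /= subn0 expr0 scale1r.
    move/eqP; rewrite addrC addr_eq0 linearN => /eqP <-.
    rewrite big_add1 /= big_mkord; apply: eq_bigr => -[i hi] _ /=.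
    by [].
  rewrite big_add1 /= big_mkord big_ord_recr /= subnn /cs /= linear0 scaler0 addr0.
  rewrite big_add1 /= big_mkord; apply: eq_bigr => -[i hi] _ /=.
  have -> : ((r.+1 - i.+1)%N == 0%N) = false by apply/eqP; lia.
  by rewrite addn0; congr (_ *: d _ (c _)); lia.
by exists (c, - W r.+1, c'); split=> //; rewrite BW_BWf.
Qed.


Lemma d3 r p q a a' : (1 <= r)%N -> ZW A r p q a -> ZW A r p q a' ->
  Br A r p q (zr a - zr a') ->
  Br A r (p - r%:Z) (q + 1 - r%:Z) (zr (Phir A r a) - Deltarep A r a').
Proof.
move=> hr ha ha' hB.
pose e j := a j - a' j.
have he : ZW A r p q e.
  rewrite ZW_ZWf // in ha; rewrite ZW_ZWf // in ha'; rewrite ZW_ZWf //.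
  have [h1 h2] := ha; have [h1' h2'] := ha'.
  split=> [i hi|l hl]; first by apply: PB; [exact: h1|exact: h1'].
  by rewrite conv_sub h2 ?h2' ?subr0.
have [t [hbw ht]] := (c4 he).1 hB.
have hz : zwlen r = r by rewrite /zwlen; apply/maxn_idPl.
rewrite hz in ht.
have [t' [hbw' ht']] := d2 hr hbw.
have [e5 hbr] := c5 hbw'.
suff -> : zr (Phir A r a) - Deltarep A r a' = betar A r t' by [].
rewrite -e5 /zr -ht' //.
have -> : Phir A r (wr A r t) 0%N = Phir A r e 0%N.
  rewrite /Phir; apply: eq_big_nat => i /andP[h1 h2]; rewrite ht //; lia.
have -> : Deltarep A r a' = Phir A r a' 0%N.
  by rewrite /Deltarep /Phir; apply: eq_bigr => i _; rewrite addn0.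
by rewrite /Phir -sumrB; apply: eq_bigr => i _; rewrite /e linearB scalerBr.
Qed.

End S.

Lemma conv_map (R : comPzRingType) (n : option nat) (M M' : lmodType R)
  (A : multicomplex n M) (A' : multicomplex n M') (f : {linear M -> M'}) :
  mc_morph A A' f -> forall u l,
  (forall i, (i <= l)%N -> exists p q, u i \in piece A p q) ->
  f (conv A u l) = conv A' (fun j => f (u j)) l.
Proof.
move=> hf u l hu; rewrite /conv linear_sum; apply: eq_bigr => -[i hi] _ /=.
rewrite linearZ /=; have [p [q h]] := hu (l - i)%N (leq_subr _ _).
by rewrite (hf.2 _ _ _ _ h).
Qed.

Lemma n1 (R : comPzRingType) (n : option nat) (M M' : lmodType R)
  (A : multicomplex n M) (A' : multicomplex n M') (f : {linear M -> M'}) r p q a :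
  mc_morph A A' f -> ZW A r p q a -> ZW A' r p q (fun j => f (a j)).
Proof.
move=> hf; case: r => [|r]; first exact: hf.1.
rewrite ZW_ZWf // ZW_ZWf // => -[h1 h2]; split=> [i hi|l hl]; first exact: hf.1 (h1 i hi).
rewrite -(conv_map hf) // ?h2 ?linear0 // => i hi; do 2 eexists; apply: h1; lia.
Qed.

Lemma n2 (R : comPzRingType) (n : option nat) (M M' : lmodType R)
  (A : multicomplex n M) (A' : multicomplex n M') (f : {linear M -> M'}) r p q x :
  mc_morph A A' f -> Br A r p q x -> Br A' r p q (f x).
Proof.
move=> hf; case: r => [|[|r]] /=; first by move=> ->; rewrite linear0.
  move=> [hx [y [hy hdy]]]; split; first exact: hf.1 hx.
  by exists (f y); split; [exact: hf.1 hy | rewrite -hdy (hf.2 _ _ _ _ hy)].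
move=> [hx [b [hb [hs hrel]]]]; split; first exact: hf.1 hx.
exists (fun j => f (b j)); split; first by move=> i hi; exact: hf.1 (hb i hi).
split.
  rewrite hs linear_sum; apply: eq_bigr => -[i hi] _ /=.
  by rewrite linearZ /= (hf.2 _ _ _ _ (hb _ _)) //; lia.
move=> l hl; have h0 : conv A b l = 0 := hrel l hl.
change (conv A' (fun j => f (b j)) l = 0).
rewrite -(conv_map hf) // ?h0 ?linear0 // => i hi; do 2 eexists; apply: hb; lia.
Qed.

Lemma n3 (R : comPzRingType) (n : option nat) (M M' : lmodType R)
  (A : multicomplex n M) (A' : multicomplex n M') (f : {linear M -> M'}) r p q t :
  mc_morph A A' f -> BW A r p q t ->
  BW A' r p q (mapBWt f t) /\ forall j, f (wr A r t j) = wr A' r (mapBWt f t) j.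
Proof.
move=> hf; case: t => [[b x] c]; case: r => [|r] hbw.
  by split=> // j; rewrite /wr /= linear0.
split.
  case: r hbw => [|r] hbw; first exact: hf.1 hbw.
  case: hbw => [hb [hx hc]].
  split; first exact: (n1 (r := r.+1) (p := p + r.+2%:Z - 1) (q := q + r.+2%:Z - 2) hf hb).
  split; first exact: hf.1 hx.
  exact: (n1 (r := r.+1) (p := p - 1) (q := q - 1) hf hc).
have hB := hbw; rewrite BW_BWf // in hB; have [hx [hb _]] := hB.
move=> j; rewrite /wr /= linearD linearD linearZ linear_sum; congr (_ + _ *: _ + _).
- by rewrite (hf.2 _ _ _ _ hx).
- apply: eq_big_nat => i hi; rewrite linearZ /= (hf.2 _ _ _ _ (hb _ _)) //.
  rewrite /=; lia.
- by case: j => [|j] /=; rewrite ?linear0.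
Qed.

Unset Implicit Arguments.
Set Strict Implicit.

Theorem mainTheorem1 (R : comPzRingType) (n : option nat) (hn : n_ge2 n)
  (M : lmodType R) (A : multicomplex n M) (r : nat) (p q : int) :
  [/\
   (forall a, ZW A r p q a -> Zr A r p q (zr a)),
   (forall x, Zr A r p q x -> exists a, ZW A r p q a /\ Br A r p q (zr a - x)),
   (forall t, BW A r p q t -> ZW A r p q (wr A r t)),
   (forall a, ZW A r p q a ->
      (Br A r p q (zr a) <->
       exists t, BW A r p q t /\ forall j, (j < zwlen r)%N -> a j = wr A r t j))
  & (forall t, BW A r p q t -> zr (wr A r t) = betar A r t /\ Br A r p q (betar A r t))]
  /\
   ((1 <= r)%N ->
     [/\ (forall a, ZW A r p q a -> ZW A r (p - r%:Z) (q + 1 - r%:Z) (Phir A r a)),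
         (forall t, BW A r p q t ->
            exists t', BW A r (p - r%:Z) (q + 1 - r%:Z) t' /\
                       forall k, (k < r)%N -> Phir A r (wr A r t) k = wr A r t' k)
       & (forall a a', ZW A r p q a -> ZW A r p q a' -> Br A r p q (zr a - zr a') ->
            Br A r (p - r%:Z) (q + 1 - r%:Z) (zr (Phir A r a) - Deltarep A r a'))])
  /\
   (forall (M' : lmodType R) (A' : multicomplex n M') (f : {linear M -> M'}),
      mc_morph A A' f ->
      [/\ (forall a, ZW A r p q a -> ZW A' r p q (fun j => f (a j))),
          (forall x, Br A r p q x -> Br A' r p q (f x))
        & (forall t, BW A r p q t ->
             BW A' r p q (mapBWt f t) /\
             forall j, f (wr A r t j) = wr A' r (mapBWt f t) j)]).
Proof.
split; first by split; [exact: c1|exact: c2|exact: c3|exact: c4|exact: c5].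
split; first by move=> hr; split; [move=> a; exact: d1 hr|move=> t; exact: d2 hr|move=> a a'; exact: d3 hr].
by move=> M' A' f hf; split; [move=> a; exact: n1 hf|move=> x; exact: n2 hf|move=> t; exact: n3 hf].
Qed.
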